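(* Let $n\le -1$ be an odd integer with $3\nmid n$. Then the reductions modulo $3$ of $g_n$ and its derivative $g_n'=dg_n/dv$ have no common factor in $\mathbb{F}_3[v]$; that is, $g_n$ is squarefree modulo $3$.
   Context: Let $a=v^2+v-1$ and $B=(v^2-1)(v^2-v-1)$. For odd $n\le -1$ with $k=(1-n)/2$, define $g_n$ by $g_n=\big[(a+b)^k-(a-b)^k-(a+b)^{k+2}+(a-b)^{k+2}\big]/b$, where $b$ is a formal square root of $B$; the expression is a polynomial in $a$ and $b^2=B$, hence $g_n\in\mathbb{Z}[v]$. *)

(* Defs.v *)
From HB Require Import structures.
From mathcomp Require Import all_boot all_order all_algebra.
Set Implicit Arguments. Unset Strict Implicit. Unset Printing Implicit Defensive.
Import Order.TTheory GRing.Theory Num.Theory.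
Local Open Scope ring_scope.

Definition pa : {poly int} := 'X^2 + 'X - 1.
Definition pB : {poly int} := ('X^2 - 1) * ('X^2 - 'X - 1).

(* [(a+b)^m - (a-b)^m] / b, expanded by the binomial theorem with b^2 = B:
   (a+b)^m - (a-b)^m = 2 * sum_{j odd} C(m,j) a^(m-j) b^j, so dividing by b
   gives 2 * sum_i C(m,2i+1) a^(m-2i-1) B^i  (terms with 2i+1 > m vanish). *)
Definition oddpart (m : nat) : {poly int} :=
  2%:R * \sum_(i < m.+1) ('C(m, i.*2.+1))%:R * pa ^+ (m - i.*2.+1) * pB ^+ i.

(* g_n for odd n <= -1, with k = (1 - n)/2:
   g_n = [(a+b)^k-(a-b)^k-(a+b)^(k+2)+(a-b)^(k+2)]/b *)
Definition kof (n : int) : nat := (`|1 - n|%N)./2.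
Definition g (n : int) : {poly int} := oddpart (kof n) - oddpart (kof n).+2.

Definition red3 (p : {poly int}) : {poly 'F_3} := map_poly (fun z : int => z%:~R) p.

(* Main.v *)
Require Import Defs.
From HB Require Import structures.
From mathcomp Require Import all_boot all_order all_algebra.
From Stdlib Require Import Ring ZArith Lia.
Import Order.TTheory GRing.Theory Num.Theory.
Set Implicit Arguments. Unset Strict Implicit.
Delimit Scope nat_scope with N.
Local Open Scope ring_scope.

Definition Ob (R : comNzRingType) (a B : R) (m : nat) : R :=
  \sum_(i < m.+1) ('C(m, i.*2.+1))%:R * a ^+ (m - i.*2.+1) * B ^+ i.
Definition Eb (R : comNzRingType) (a B : R) (m : nat) : R :=
  \sum_(i < m.+1) ('C(m, i.*2))%:R * a ^+ (m - i.*2) * B ^+ i.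

Lemma Ob_S (R : comNzRingType) (a B : R) m : Ob a B m.+1 = a * Ob a B m + Eb a B m.
Proof.
rewrite /Ob big_ord_recr /= bin_small; last by rewrite doubleS ltnS leqW // -addnn leq_addr.
rewrite mul0r mul0r addr0.
under eq_bigr => i _ do rewrite binS natrD subSS !mulrDl.
rewrite big_split /=; congr (_ + _).
rewrite mulr_sumr; apply: eq_bigr => i _.
case: (leqP (i.*2.+1) m) => h.
  by rewrite -(subnSK h) exprS mulrCA !mulrA.
by rewrite bin_small // !mul0r mulr0.
Qed.

Lemma Eb_S (R : comNzRingType) (a B : R) m : Eb a B m.+1 = a * Eb a B m + B * Ob a B m.
Proof.
rewrite /Eb big_ord_recl /= bin0 subn0 mul1r expr0 mulr1.
under eq_bigr => i _ do rewrite /bump leq0n add1n doubleS binS natrD subSS !mulrDl.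
rewrite big_split /= addrA; congr (_ + _).
  rewrite big_ord_recr /=; have -> : 'C(m, m.*2.+2) = 0 by rewrite bin_small // -addnn ltnS leqW // leq_addr.
  rewrite !mul0r addr0 mulr_sumr big_ord_recl /= bin0 subn0 mul1r expr0 mulr1 -exprS.
  congr (_ + _); apply: eq_bigr => i _.
  rewrite /bump leq0n add1n doubleS.
  case: (leqP (i.*2.+2) m) => h.
    by rewrite -(subnSK h) exprS mulrCA !mulrA.
  by rewrite bin_small // !mul0r mulr0.
rewrite /Ob mulr_sumr; apply: eq_bigr => i _.
by rewrite exprS mulrCA.
Qed.

Lemma Ob_SS (R : comNzRingType) (a B : R) m :
  Ob a B m.+2 = (a + a) * Ob a B m.+1 - (a * a - B) * Ob a B m.
Proof.
rewrite Ob_S Eb_S.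
have -> : Eb a B m = Ob a B m.+1 - a * Ob a B m by rewrite Ob_S addrC addKr.
by rewrite mulrBr mulrDl mulrBl !mulrA opprB !addrA addrAC.
Qed.

Definition P3 : Type := {poly 'F_3}.
Definition add3 (x y : P3) : P3 := x + y.
Definition mul3 (x y : P3) : P3 := x * y.
Definition sub3 (x y : P3) : P3 := x - y.
Definition opp3 (x : P3) : P3 := - x.
Definition z3 : P3 := 0.
Definition o3 : P3 := 1.
Lemma P3_rt : @ring_theory P3 z3 o3 add3 mul3 sub3 opp3 eq.
Proof.
rewrite /add3 /mul3 /sub3 /opp3 /z3 /o3.
split=> //; [exact: add0r|exact: addrC|exact: addrA|exact: mul1r|exact: mulrC|exact: mulrA|exact: mulrDl|exact: subrr].
Qed.
Definition phi3 := gen_phiZ z3 o3 add3 mul3 opp3.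
Definition zeq3 (x y : Z) : bool := Z.eqb ((x - y) mod 3) 0.
Lemma three0 : (1 + 1 + 1 : {poly 'F_3}) = 0.
Proof. by rewrite -polyC1 -!polyCD -polyC0; congr polyC; apply/val_inj. Qed.
Lemma phi3_morph : ring_morph z3 o3 add3 mul3 sub3 opp3 eq
   0%Z 1%Z Z.add Z.mul Z.sub Z.opp zeq3 phi3.
Proof.
have M := gen_phiZ_morph (Eqsth P3) (Eq_ext add3 mul3 opp3) P3_rt.
case: M => h0 h1 hadd hsub hmul hopp _.
split=> //.
move=> x y /Z.eqb_eq H.
have [q Hq] : exists q, (x - y = 3 * q)%Z.
  exists ((x - y) / 3)%Z. rewrite {1}(Z.div_mod (x - y) 3) //. rewrite H. ring.
have : phi3 (x - y) = phi3 (3 * q) by rewrite Hq.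
rewrite /phi3 hsub hmul /= /add3 /mul3 /sub3 /o3 addrA three0 mul0r => /eqP; rewrite subr_eq0 => /eqP //.
Qed.
Add Ring P3ring : P3_rt (morphism phi3_morph).

Lemma add3E (x y : {poly 'F_3}) : x + y = add3 x y. Proof. by []. Qed.
Lemma mul3E (x y : {poly 'F_3}) : x * y = mul3 x y. Proof. by []. Qed.
Lemma sub3E (x y : {poly 'F_3}) : x - y = sub3 x y. Proof. by []. Qed.
Lemma opp3E (x : {poly 'F_3}) : - x = opp3 x. Proof. by []. Qed.
Lemma z3E : 0 = z3. Proof. by []. Qed.
Lemma o3E : 1 = o3. Proof. by []. Qed.
Lemma to3 (x y : P3) : x = y -> x = y. Proof. by []. Qed.
Ltac ring3 := apply: to3; rewrite ?mulr2n ?expr2 ?sub3E ?add3E ?mul3E ?opp3E ?z3E ?o3E; ring.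

Definition F3 : Type := 'F_3.
Definition addF (x y : F3) : F3 := x + y.
Definition mulF (x y : F3) : F3 := x * y.
Definition subF (x y : F3) : F3 := x - y.
Definition oppF (x : F3) : F3 := - x.
Definition zF : F3 := 0.
Definition oF : F3 := 1.
Lemma F3_rt : @ring_theory F3 zF oF addF mulF subF oppF eq.
Proof.
rewrite /addF /mulF /subF /oppF /zF /oF.
split=> //; [exact: add0r|exact: addrC|exact: addrA|exact: mul1r|exact: mulrC|exact: mulrA|exact: mulrDl|exact: subrr].
Qed.
Definition phiF := gen_phiZ zF oF addF mulF oppF.
Definition zeqF (x y : Z) : bool := Z.eqb ((x - y) mod 3) 0.
Lemma three0F : (1 + 1 + 1 : 'F_3) = 0.
Proof. by apply/val_inj. Qed.
Lemma phiF_morph : ring_morph zF oF addF mulF subF oppF eq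
   0%Z 1%Z Z.add Z.mul Z.sub Z.opp zeqF phiF.
Proof.
have M := gen_phiZ_morph (Eqsth F3) (Eq_ext addF mulF oppF) F3_rt.
case: M => h0 h1 hadd hsub hmul hopp _.
split=> //.
move=> x y /Z.eqb_eq H.
have [q Hq] : exists q, (x - y = 3 * q)%Z.
  exists ((x - y) / 3)%Z. rewrite {1}(Z.div_mod (x - y) 3) //. rewrite H. ring.
have : phiF (x - y) = phiF (3 * q) by rewrite Hq.
rewrite /phiF hsub hmul /= /addF /mulF /subF /oF addrA three0F mul0r => /eqP; rewrite subr_eq0 => /eqP //.
Qed.
Add Ring F3ring : F3_rt (morphism phiF_morph).

Lemma addFE (x y : 'F_3) : x + y = addF x y. Proof. by []. Qed.
Lemma mulFE (x y : 'F_3) : x * y = mulF x y. Proof. by []. Qed.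
Lemma subFE (x y : 'F_3) : x - y = subF x y. Proof. by []. Qed.
Lemma oppFE (x : 'F_3) : - x = oppF x. Proof. by []. Qed.
Lemma zFE : 0 = zF. Proof. by []. Qed.
Lemma oFE : 1 = oF. Proof. by []. Qed.
Lemma toF (x y : F3) : x = y -> x = y. Proof. by []. Qed.
Ltac ringF := apply: toF; rewrite ?mulr2n ?expr2 ?subFE ?addFE ?mulFE ?oppFE ?zFE ?oFE; ring.

Definition F3P := {poly 'F_3}.
Definition XX : {poly 'F_3} := 'X.
Definition A3 : {poly 'F_3} := XX * XX + XX - 1.
Definition B3 : {poly 'F_3} := (XX * XX - 1) * (XX * XX - XX - 1).
Definition W3 : {poly 'F_3} := 1 + XX * XX.
Definition C3 : {poly 'F_3} := XX * XX * XX + XX * XX - 1.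

Lemma dA3 : A3^`() = XX + XX + 1.
Proof. by rewrite /A3 /XX derivB derivD derivM derivX -polyC1 derivC mul1r mulr1 subr0. Qed.
Lemma dB3 : B3^`() = (XX + XX) * (XX * XX - XX - 1) + (XX * XX - 1) * (XX + XX - 1).
Proof. by rewrite /B3 /XX !(derivM, derivB, derivD) derivX -polyC1 derivC mul1r mulr1 !subr0. Qed.

Lemma lin2 (l r l0 r0 l1 r1 c0 c1 : {poly 'F_3}) :
  l - r = c0 * (l0 - r0) + c1 * (l1 - r1) -> l0 = r0 -> l1 = r1 -> l = r.
Proof. by move=> H E0 E1; apply/eqP; rewrite -subr_eq0 H E0 E1 !subrr !mulr0 addr0. Qed.

Section U.
Variable U : nat -> {poly 'F_3}.
Hypothesis U0 : U 0 = 0.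
Hypothesis U1 : U 1 = - 1.
Hypothesis US : forall m, U m.+2 = - (A3 * U m.+1) - XX * XX * U m.

Lemma dUS m : (U m.+2)^`() = - (A3^`() * U m.+1 + A3 * (U m.+1)^`()) - ((XX + XX) * U m + XX * XX * (U m)^`()).
Proof. by rewrite US derivB derivN !derivM /XX derivX mul1r mulr1. Qed.

Lemma cassini m : U m.+1 * U m.+1 + A3 * U m.+1 * U m + XX * XX * U m * U m = XX ^+ (m.*2).
Proof.
elim: m => [|m IH]; first by rewrite U1 U0 expr0; ring3.
rewrite US doubleS !exprS -IH; ring3.
Qed.

Lemma derivU m : XX * (B3 * (U m)^`() - B3^`() * U m) = m%:R * (W3 * U m.+1 + C3 * U m).
Proof.
elim/ltn_ind: m => -[|[|m]] IH.
- rewrite U0 deriv0 mul0r; ring3.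
- rewrite mulr1n US U1 U0 -polyC1 -polyCN derivC ?polyCN ?polyC1 dB3 /A3 /W3 /C3 /B3; ring3.
- have E0 := IH m (leqW (ltnSn m)).
  have E1 := IH m.+1 (ltnSn m.+1).
  apply: (lin2 (c0 := - XX * XX) (c1 := - A3) _ E0 E1).
  rewrite dUS (US m.+1) US dB3 dA3 /A3 /W3 /C3 /B3 -!natr1; ring3.
Qed.


Lemma derivB3 (p q : {poly 'F_3}) : (p - q)^`() = p^`() - q^`(). Proof. exact: derivB. Qed.

Lemma natr3 : 3%:R = 1 + 1 + 1 :> {poly 'F_3}.
Proof. by rewrite !mulrS mulr0n addr0 addrA. Qed.

Lemma ev0 m : (U m.+1).[0] = -1.
Proof.
elim: m => [|m IH]; first by rewrite U1 hornerN hornerC.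
rewrite US !hornerE IH; ringF.
Qed.

Lemma evd0 m : ((U m.+1)^`()).[0] = m%:R.
Proof.
elim: m => [|m IH]; first by rewrite U1 -polyCN derivC hornerC.
rewrite dUS dA3 !hornerE IH ev0 -natr1; ringF.
Qed.

Lemma combine (G E P Q r s w a D Z d : {poly 'F_3}) :
  G = w * P + a * Q -> E = r * P + s * Q -> D * D = (w * s - a * r) * (w * s - a * r) ->
  Q * Q + a * Q * P + XX * XX * P * P = Z ->
  d %| G -> d %| E -> d %| D * D * Z.
Proof.
move=> HG HE HD HZ dG dE.
have -> : D * D * Z = (w * E - r * G) * (w * E - r * G) + a * (w * E - r * G) * (s * G - a * E)
   + XX * XX * (s * G - a * E) * (s * G - a * E).
  by rewrite -HZ HD HG HE; ring3.
have d1 : d %| w * E - r * G by rewrite dvdp_sub // dvdp_mull.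
have d2 : d %| s * G - a * E by rewrite dvdp_sub // dvdp_mull.
by rewrite !dvdp_add // dvdp_mull.
Qed.

Lemma key k : (0 < k)%N -> (k %% 3 != 2)%N ->
  coprimep (U k - U k.+2) (U k - U k.+2)^`().
Proof.
move=> k0 k3.
set G := U k - U k.+2.
set E := XX * (B3 * G^`() - B3^`() * G).
have HG : G = W3 * U k + A3 * U k.+1 by rewrite /G US /W3; ring3.
have HE0 : E = k%:R * (W3 * U k.+1 + C3 * U k) - (k.+2)%:R * (W3 * U k.+3 + C3 * U k.+2).
  rewrite /E /G derivB3.
  transitivity (XX * (B3 * (U k)^`() - B3^`() * U k) - XX * (B3 * (U k.+2)^`() - B3^`() * U k.+2)); first ring3.
  by rewrite !derivU.
have HC := cassini k.
have nG1 : ~~ root G 1.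
  apply/negP => /rootP; rewrite HG /W3 /A3 /XX !hornerE => H.
  move: HC => /(congr1 (fun p => p.[1])); rewrite /A3 /XX !hornerE expr1n.
  set p := (U k).[1] in H *; set q := (U k.+1).[1] in H *.
  have Hq : q = p.
    apply/eqP; rewrite -subr_eq0; apply/eqP; rewrite -H; ringF.
  rewrite Hq => H2.
  have : (1 : 'F_3) = 0 by rewrite -H2; ringF.
  by move/eqP; rewrite oner_eq0.
have nG2 : ~~ root G (-1).
  apply/negP => /rootP; rewrite HG /W3 /A3 /XX !hornerE => H.
  move: HC => /(congr1 (fun p => p.[-1])); rewrite /A3 /XX !hornerE.
  rewrite -mul2n exprM sqrrN expr1n expr1n.
  set p := (U k).[-1] in H *; set q := (U k.+1).[-1] in H *.
  have Hq : q = - p.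
    apply/eqP; rewrite -subr_eq0 -oppr_eq0; apply/eqP; rewrite -H; ringF.
  rewrite Hq => H2.
  have : (1 : 'F_3) = 0 by rewrite -H2; ringF.
  by move/eqP; rewrite oner_eq0.
have nGd : ~~ root G^`() 0.
  apply/negP => /rootP; rewrite /G derivB3 !hornerE.
  case: k k0 {k3 G E HG HE0 HC nG1 nG2} => // j _.
  rewrite evd0 evd0 -!natr1 => H.
  have : (1 : 'F_3) = 0 by rewrite -H; ringF.
  by move/eqP; rewrite oner_eq0.
apply/coprimepP => d dG dGd.
have dE : d %| E by rewrite /E dvdp_mull // dvdp_sub // dvdp_mull.
have cX : coprimep d XX.
  apply: (coprimep_dvdr dGd).
  by have := coprimep_XsubC G^`() 0; rewrite polyC0 subr0 /XX => ->.
have cm1 : coprimep d (XX - 1).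
  apply: (coprimep_dvdr dG).
  by have := coprimep_XsubC G 1; rewrite polyC1 /XX => ->.
have cp1 : coprimep d (XX + 1).
  apply: (coprimep_dvdr dG).
  by have := coprimep_XsubC G (-1); rewrite polyCN opprK polyC1 /XX => ->.
have fin : forall D, d %| D * D * XX ^+ k.*2 -> coprimep d D -> d %= 1.
  move=> D HD cD.
  have cT : coprimep d (D * D * XX ^+ k.*2) by rewrite !coprimepMr cD coprimep_expr.
  exact: (coprimepP _ _ cT d (dvdpp d) HD).
have Hk := divn_eq k 3.
have : (k %% 3 < 3)%N by rewrite ltn_mod.
move: k3 Hk; set r := (k %% 3)%N; set j := (k %/ 3)%N.
case: r => [|[|[|r]]] // _ Hk _.
-
  have kk0 : k%:R = 0 :> {poly 'F_3} by rewrite Hk addn0 natrM natr3; ring3.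
  have kk2 : (k.+2)%:R = 1 + 1 :> {poly 'F_3}.
    by rewrite Hk addn0 -!natr1 natrM natr3; ring3.
  have HE : E = (W3 * A3 * XX * XX - C3 * XX * XX) * U k
     + (W3 * (A3 * A3 - XX * XX) - C3 * A3) * U k.+1.
    by rewrite HE0 kk0 kk2 (US k.+1) (US k); ring3.
  apply: (fin (XX * (XX - 1) * (XX + 1) * (XX + 1) * (XX + 1))); last by rewrite !coprimepMr cX cm1 cp1.
  apply: (combine HG HE _ HC dG dE).
  by rewrite /W3 /A3 /C3; ring3.
-
  have kk1 : k%:R = 1 :> {poly 'F_3} by rewrite Hk natrD natrM natr3 mulr1n; ring3.
  have kk2 : (k.+2)%:R = 0 :> {poly 'F_3}.
    by rewrite Hk -!natr1 natrD natrM natr3 mulr1n; ring3.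
  have HE : E = C3 * U k + W3 * U k.+1 by rewrite HE0 kk1 kk2; ring3.
  apply: (fin (XX * (XX + 1) * (XX - 1) * (XX - 1) * (XX - 1))); last by rewrite !coprimepMr cX cm1 cp1.
  apply: (combine HG HE _ HC dG dE).
  by rewrite /W3 /A3 /C3; ring3.
Qed.
End U.

Delimit Scope nat_scope with N.
Delimit Scope int_scope with Z.

Lemma red3D (p q : {poly int}) : red3 (p + q) = red3 p + red3 q. Proof. by rewrite /red3 rmorphD. Qed.
Lemma red3B (p q : {poly int}) : red3 (p - q) = red3 p - red3 q. Proof. by rewrite /red3 rmorphB. Qed.
Lemma red3M (p q : {poly int}) : red3 (p * q) = red3 p * red3 q. Proof. by rewrite /red3 rmorphM. Qed.
Lemma red31 : red3 1 = 1. Proof. by rewrite /red3 rmorph1. Qed.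
Lemma red30 : red3 0 = 0. Proof. by rewrite /red3 rmorph0. Qed.
Lemma red3X : red3 'X = 'X. Proof. by rewrite /red3 map_polyX. Qed.
Lemma red3n k : red3 k%:R = k%:R. Proof. by rewrite /red3 rmorph_nat. Qed.
Lemma red3_deriv (p : {poly int}) : red3 p^`() = (red3 p)^`(). Proof. by rewrite /red3 deriv_map. Qed.
Lemma red3_pa : red3 pa = A3.
Proof. by rewrite /pa /A3 /XX !expr2 red3B red3D red3M red3X red31. Qed.
Lemma red3_pB : red3 pB = B3.
Proof. by rewrite /pB /B3 /XX !expr2 red3M !red3B red3M red3X red31. Qed.

Definition Uo (m : nat) : {poly 'F_3} := red3 (oddpart m).

Lemma Uo_Ob m : Uo m = 2%:R * red3 (Ob pa pB m).
Proof. by rewrite /Uo red3M red3n. Qed.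

Lemma Uo0 : Uo 0 = 0.
Proof.
by rewrite Uo_Ob /Ob big_ord1 bin_small // mul0r mul0r red30 mulr0.
Qed.

Lemma Uo1 : Uo 1 = -1.
Proof.
rewrite Uo_Ob /Ob big_ord_recr big_ord1 /= (_ : 'C(1, 0.*2.+1) = 1) // (_ : 'C(1, 1.*2.+1) = 0) // (_ : (1 - 0.*2.+1)%N = 0%N) //.
rewrite !mul0r addr0 expr0 !mulr1 mulr1n.
rewrite red31; ring3.
Qed.

Lemma UoS m : Uo m.+2 = - (A3 * Uo m.+1) - XX * XX * Uo m.
Proof.
rewrite !Uo_Ob Ob_SS !(red3B, red3D, red3M) ?red3X ?red31 /A3 /XX.
ring3.
Qed.

Theorem proposition5p7 (n : int) :
  n <= -1 -> odd `|n|%N -> ~~ (3 %| n)%Z ->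
  coprimep (red3 (g n)) (red3 (g n)^`()).
Proof.
move=> hn hodd h3.
set N := `|n|%N.
have Hn : n = - (N%:Z) by rewrite /N lez0_abs ?opprK // (le_trans hn) // lerN10.
have HK : kof n = (N./2).+1.
  rewrite /kof Hn opprK.
  have -> : (1 + N%:Z) = (N.+1)%:Z by rewrite -addn1 PoszD addrC.
  by rewrite absz_nat -{1}(odd_double_half N) hodd /= add0n doubleK.
have h3N : ~~ (3 %| N)%N by move: h3; rewrite dvdzE.
have red : red3 (g n) = Uo (kof n) - Uo (kof n).+2 by rewrite /g /Uo red3B.
rewrite red3_deriv red.
apply: (key Uo0 Uo1 UoS); first by rewrite HK.
apply/negP => /eqP k2; apply: (negP h3N).
have hN : N.+1 = (kof n).*2 by rewrite HK -{1}(odd_double_half N) hodd.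
have Hk := divn_eq (kof n) 3; rewrite k2 in Hk.
set q := (kof n %/ 3)%N in Hk.
have -> : N = (3 * (2 * q + 1))%N.
  rewrite Hk -addnn in hN. rewrite -!plusE -!multE in hN *. lia.
exact: dvdn_mulr.
Qed.
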